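(* In the standing setting, for every $a'\in P'$ we have $g'(\downarrow\{a'\})=\downarrow f^{-1}(a')$, where $\downarrow\{a'\}=\{b'\in P': b'\preceq' a'\}\in Q'$ and $\downarrow f^{-1}(a')=\{b\in P:\ \exists a\in f^{-1}(a') \text{ with } b\preceq a\}$.
   Context: Standing setting: $(P,\preceq)$ is a finite poset with a bottom and a top element; $f:P\to P'$ is a surjective map onto $P'=f(P)$; $f^{-1}(a')=\{a\in P: f(a)=a'\}$; the relation $\preceq'$ on $P'$ is defined by $b'\preceq' a'$ iff there exist $a\in f^{-1}(a')$, $b\in f^{-1}(b')$ with $b\preceq a$. Assume the three conditions: (D) for all $a',b'\in P'$ with $b'\preceq' a'$ and every $a\in f^{-1}(a')$ there is $b\in f^{-1}(b')$ with $b\preceq a$; (U) for all $a',b'\in P'$ with $b'\preceq' a'$ and every $b\in f^{-1}(b')$ there is $a\in f^{-1}(a')$ with $b\preceq a$; (S) for all $a,b,c\in P$, if $c\preceq b\preceq a$ and $f(c)=f(a)$ then $f(b)=f(a)$. (Then $(P',\preceq')$ is a poset.) A down-set of a poset is a subset $A$ such that $a\in A$ and $b\preceq a$ imply $b\in A$. $Q$ is the set of nonempty down-sets of $(P,\preceq)$ and $Q'$ the set of nonempty down-sets of $(P',\preceq')$, each ordered by inclusion. $g:2^P\to 2^{P'}$ is $g(A)=\{f(a):a\in A\}$. For $A'\in Q'$, $g^{-1}(A')=\{A\in Q: g(A)=A'\}$ and $g'(A')=\bigcup_{A\in g^{-1}(A')}A$. *)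

(* Defs.v *)
From HB Require Import structures.
From mathcomp Require Import all_boot all_order.
Set Implicit Arguments. Unset Strict Implicit. Unset Printing Implicit Defensive.
Import Order.Theory.
Local Open Scope order_scope.

Section Defs.
Context {d : Order.disp_t} {P : finTBPOrderType d} {P' : finType}.
Variable f : P -> P'.

Definition lep' (b' a' : P') : bool :=
  [exists a : P, exists b : P, [&& f a == a', f b == b' & b <= a]].

Definition is_downset (A : {set P}) : bool :=
  [forall a : P, forall b : P, (a \in A) && (b <= a) ==> (b \in A)].
Definition is_downset' (A' : {set P'}) : bool :=
  [forall a' : P', forall b' : P', (a' \in A') && lep' b' a' ==> (b' \in A')].

Definition inQ (A : {set P}) : bool := is_downset A && (A != set0).
Definition inQ' (A' : {set P'}) : bool := is_downset' A' && (A' != set0).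

Definition g (A : {set P}) : {set P'} := f @: A.

Definition g_pre (A' : {set P'}) : {set {set P}} :=
  [set A : {set P} | inQ A && (g A == A')].

Definition g' (A' : {set P'}) : {set P} := \bigcup_(A in g_pre A') A.

Definition down' (a' : P') : {set P'} := [set b' : P' | lep' b' a'].
Definition down_fiber (a' : P') : {set P} :=
  [set b : P | [exists a : P, (f a == a') && (b <= a)]].
End Defs.

(* Main.v *)
Require Import Defs.
From HB Require Import structures.
From mathcomp Require Import all_boot all_order.
Import Order.Theory.
Local Open Scope order_scope.

Theorem lemma12 (d : Order.disp_t) (P : finTBPOrderType d) (P' : finType)
  (f : P -> P')
  (f_surj : forall a' : P', exists a : P, f a = a')
  (HD : forall a' b' : P', lep' f b' a' ->
        forall a : P, f a = a' -> exists b : P, f b = b' /\ b <= a)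
  (HU : forall a' b' : P', lep' f b' a' ->
        forall b : P, f b = b' -> exists a : P, f a = a' /\ b <= a)
  (HS : forall a b c : P, c <= b -> b <= a -> f c = f a -> f b = f a) :
  forall a' : P', g' f (down' f a') = down_fiber f a'.
Proof.
move=> a'.
apply/setP=> b; apply/idP/idP.
- case/bigcupP=> A; rewrite inE => /andP [_ /eqP gA] bA.
  have : f b \in g f A by apply: imset_f.
  rewrite gA inE => /HU /(_ b erefl) [a [fa ba]].
  by rewrite inE; apply/existsP; exists a; rewrite fa eqxx ba.
- move=> bD; apply/bigcupP; exists (down_fiber f a') => //.
  rewrite inE; apply/andP; split.
  + rewrite /inQ; apply/andP; split.
    * apply/forallP=> x; apply/forallP=> y; apply/implyP=> /andP [].
      rewrite !inE => /existsP [a /andP [fa xa]] yx.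
      by apply/existsP; exists a; rewrite fa (le_trans yx xa).
    * have [a fa] := f_surj a'.
      apply/set0Pn; exists a; rewrite inE; apply/existsP; exists a.
      by rewrite fa eqxx lexx.
  + apply/eqP/setP=> y'; rewrite inE; apply/idP/idP.
    * case/imsetP=> y; rewrite inE => /existsP [a /andP [fa ya]] ->.
      by apply/existsP; exists a; apply/existsP; exists y; rewrite fa !eqxx ya.
    * case/existsP=> a /existsP [y /and3P [fa /eqP fy ya]].
      rewrite -fy; apply: imset_f; rewrite inE.
      by apply/existsP; exists a; rewrite fa ya.
Qed.
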